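(* Let $G$ be a graph. Then \[\chi(G) \leq \frac{1}{2} \left(\omega(G) + \Delta(G) + 1 \right) + \kappa(\overline{G}) + 1 - \frac{\alpha(G)}{4}.\]
   Context: All graphs are finite and simple with non-empty vertex set. $\chi$ is the chromatic number, $\omega$ the clique number, $\Delta$ the maximum degree, $\alpha$ the independence number. $\overline{G}$ is the complement of $G$, and $\kappa(\overline{G})$ is its vertex connectivity: the minimum size of a set $K$ of vertices with $\overline{G}-K$ disconnected, or $|G|-1$ if $\overline{G}$ is complete (here $|G|$ is the number of vertices). *)

(* Defs.v *)
(* A simple graph on a finite vertex type T is a
   symmetric irreflexive relation e : rel T. *)
From mathcomp Require Import all_boot all_order all_algebra.
Set Implicit Arguments.
Unset Strict Implicit.
Unset Printing Implicit Defensive.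

Section Graphs.
Variable T : finType.
Variable e : rel T.


Definition colourable (k : nat) : bool :=
  [exists f : {ffun T -> 'I_k}, [forall x, forall y, e x y ==> (f x != f y)]].

Lemma colourable_exists : irreflexive e -> exists k, colourable k.
Proof.
move=> irr; exists #|T|; apply/existsP; exists [ffun x => enum_rank x].
apply/forallP => x; apply/forallP => y; apply/implyP => exy.
rewrite !ffunE; apply/negP => /eqP /enum_rank_inj exy'.
by move: exy; rewrite exy' irr.
Qed.

Definition chi (irr : irreflexive e) : nat := ex_minn (colourable_exists irr).

Definition is_clique (A : {set T}) : bool :=
  [forall x in A, forall y in A, (x != y) ==> e x y].
Definition is_stable (A : {set T}) : bool :=
  [forall x in A, forall y in A, ~~ e x y].
Definition omega : nat := \max_(A : {set T} | is_clique A) #|A|.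
Definition alpha : nat := \max_(A : {set T} | is_stable A) #|A|.
Definition Delta : nat := \max_(x : T) #|[set y | e x y]|.

Definition compl_rel : rel T := [rel x y | (x != y) && ~~ e x y].

Definition disconnects (h : rel T) (K : {set T}) : bool :=
  [exists u, exists v, [&& u \notin K, v \notin K &
     ~~ connect [rel x y | [&& h x y, x \notin K & y \notin K]] u v]].

(* vertex connectivity: minimum size of a disconnecting set, or |V|-1 if
   no set disconnects (i.e. h is complete) *)
Definition kappa (h : rel T) : nat :=
  \big[minn/#|T|.-1]_(K : {set T} | disconnects h K) #|K|.
End Graphs.

(* Main.v *)
Require Import Defs.
From mathcomp Require Import all_boot all_order all_algebra zify.
Set Implicit Arguments.
Unset Strict Implicit.
Unset Printing Implicit Defensive.

Section Params.
Variable T : finType.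
Variable e : rel T.
Hypothesis esym : symmetric e.
Hypothesis eirr : irreflexive e.

Definition omegaS (A : {set T}) : nat :=
  \max_(C : {set T} | (C \subset A) && is_clique e C) #|C|.
Definition alphaS (A : {set T}) : nat :=
  \max_(C : {set T} | (C \subset A) && is_stable e C) #|C|.
Definition degS (A : {set T}) (x : T) : nat := #|[set y in A | e x y]|.
Definition DeltaS (A : {set T}) : nat := \max_(x in A) degS A x.

Lemma clique_le (C A : {set T}) : C \subset A -> is_clique e C -> #|C| <= omegaS A.
Proof. by move=> sCA cC; apply: (@leq_bigmax_cond _ (fun C : {set T} => (C \subset A) && is_clique e C)); rewrite sCA. Qed.

Lemma stable_le (C A : {set T}) : C \subset A -> is_stable e C -> #|C| <= alphaS A.
Proof. by move=> sCA cC; apply: (@leq_bigmax_cond _ (fun C : {set T} => (C \subset A) && is_stable e C)); rewrite sCA. Qed.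

Lemma omega_ex (A : {set T}) : exists C : {set T}, [/\ C \subset A, is_clique e C & #|C| = omegaS A].
Proof.
pose P := fun C : {set T} => (C \subset A) && is_clique e C.
have P0 : P set0 by rewrite /P sub0set; apply/forallP=> x; rewrite inE.
rewrite /omegaS (bigmax_eq_arg _ P0).
case: arg_maxnP => // C /andP[H1 H2] _; by exists C.
Qed.

Lemma alpha_ex (A : {set T}) : exists C : {set T}, [/\ C \subset A, is_stable e C & #|C| = alphaS A].
Proof.
pose P := fun C : {set T} => (C \subset A) && is_stable e C.
have P0 : P set0 by rewrite /P sub0set; apply/forallP=> x; rewrite inE.
rewrite /alphaS (bigmax_eq_arg _ P0).
case: arg_maxnP => // C /andP[H1 H2] _; by exists C.
Qed.

Lemma deg_le (A : {set T}) x : x \in A -> degS A x <= DeltaS A.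
Proof. by move=> xA; apply: (@leq_bigmax_cond _ (fun x => x \in A)). Qed.

Lemma Delta_ex (A : {set T}) : A != set0 -> exists2 x, x \in A & DeltaS A = degS A x.
Proof.
move=> /set0Pn [y yA].
rewrite /DeltaS (bigmax_eq_arg _ yA).
case: arg_maxnP => // x xA _; by exists x.
Qed.

Lemma isstableP (C : {set T}) : reflect {in C &, forall x y, ~~ e x y} (is_stable e C).
Proof.
apply: (iffP forall_inP) => [H x y xC yC | H x xC].
  by have /forall_inP := H x xC; apply.
by apply/forall_inP => y yC; apply: H.
Qed.

Lemma iscliqueP (C : {set T}) : reflect {in C &, forall x y, x != y -> e x y} (is_clique e C).
Proof.
apply: (iffP forall_inP) => [H x y xC yC | H x xC].
  by have /forall_inP := H x xC; move/(_ y yC)/implyP.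
by apply/forall_inP => y yC; apply/implyP; apply: H.
Qed.


Definition colS (A : {set T}) (k : nat) : Prop :=
  exists f : T -> T, [/\ {in A, forall x, f x \in A},
     {in A &, forall x y, e x y -> f x != f y} & #|f @: A| <= k].

Lemma col_self (A : {set T}) : colS A #|A|.
Proof.
exists id; split => //.
  by move=> x y xA yA exy; apply/eqP => Exy; move: exy; rewrite Exy eirr.
by rewrite imset_id.
Qed.

Lemma col_mono (A : {set T}) k k' : k <= k' -> colS A k -> colS A k'.
Proof. by move=> kk [f [H1 H2 H3]]; exists f; split => //; apply: leq_trans kk. Qed.

Lemma col_union (A B : {set T}) ka kb : [disjoint A & B] ->
  colS A ka -> colS B kb -> colS (A :|: B) (ka + kb).
Proof.
move=> dAB [fa [a1 a2 a3]] [fb [b1 b2 b3]].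
have nAB x : x \in B -> x \notin A.
  by move=> xB; apply/negP => xA; move: (disjointFr dAB xA); rewrite xB.
exists (fun x => if x \in A then fa x else fb x); split.
- move=> x xAB; rewrite inE; case: ifP => xA; first by rewrite a1.
  by move: xAB; rewrite inE xA /= => xB; rewrite b1 ?orbT.
- move=> x y; rewrite !inE => /orP[xA|xB] /orP[yA|yB] exy.
  + by rewrite xA yA a2.
  + rewrite xA (negbTE (nAB _ yB)); apply/eqP => E.
    by move: (nAB _ (b1 _ yB)); rewrite -E a1.
  + rewrite yA (negbTE (nAB _ xB)); apply/eqP => E.
    by move: (nAB _ (b1 _ xB)); rewrite E a1.
  + by rewrite (negbTE (nAB _ xB)) (negbTE (nAB _ yB)) b2.
- rewrite imsetU; apply: leq_trans (leq_card_setU _ _) _.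
  apply: leq_add.
    apply: leq_trans a3; apply: subset_leq_card; apply/subsetP => z /imsetP[x xA ->].
    by rewrite xA imset_f.
  apply: leq_trans b3; apply: subset_leq_card; apply/subsetP => z /imsetP[x xB ->].
  by rewrite (negbTE (nAB _ xB)) imset_f.
Qed.

Lemma col_stable_add (S A : {set T}) k : is_stable e S -> [disjoint S & A] ->
  colS A k -> colS (S :|: A) k.+1.
Proof.
move=> sS dSA cA.
have [S0|[s0 s0S]] := set_0Vmem S.
  by rewrite S0 set0U; apply: col_mono cA.
have cS : colS S 1.
  exists (fun _ => s0); split => //.
    by move=> x y xS yS exy; move/isstableP: sS => /(_ x y xS yS); rewrite exy.
  apply: leq_trans (subset_leq_card (_ : _ \subset [set s0])) _; last by rewrite cards1.
  by apply/subsetP => z /imsetP[x _ ->]; rewrite inE.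
by rewrite -add1n; apply: col_union.
Qed.

Lemma chi_le k : 0 < #|T| -> colS setT k -> chi eirr <= k.
Proof.
move=> hT [f [f1 f2 f3]].
set im := f @: setT.
have im0 : 0 < #|im|.
  by move/card_gt0P: hT => [x _]; apply/card_gt0P; exists (f x); rewrite imset_f ?inE.
case: k f3 => [|k] f3; first by move: (leq_trans im0 f3).
pose g := [ffun x => inord (index (f x) (enum im)) : 'I_k.+1].
have ix x : index (f x) (enum im) <= k.
  rewrite -ltnS; apply: leq_trans f3; rewrite cardE index_mem mem_enum.
  by rewrite imset_f ?inE.
have colg : colourable e k.+1.
  apply/existsP; exists g; apply/forallP => x; apply/forallP => y; apply/implyP => exy.
  rewrite !ffunE; apply/negP => /eqP E.
  have := congr1 (@nat_of_ord _) E; rewrite !inordK ?ltnS ?ix // => Ei.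
  have := f2 x y (in_setT x) (in_setT y) exy; apply/negP; rewrite negbK.
  rewrite -(nth_index (f x) (_ : f x \in enum im)) ?mem_enum ?imset_f ?inE //.
  rewrite Ei nth_index // mem_enum imset_f ?inE //.
rewrite /chi; case: ex_minnP => m _ /(_ _ colg); done.
Qed.


Lemma omega_mono (A B : {set T}) : A \subset B -> omegaS A <= omegaS B.
Proof.
move=> sAB; have [C [sCA cC <-]] := omega_ex A.
by apply: clique_le => //; apply: subset_trans sAB.
Qed.

Lemma alpha_le_card (A : {set T}) : alphaS A <= #|A|.
Proof. by have [C [sCA _ <-]] := alpha_ex A; apply: subset_leq_card. Qed.

Lemma stable_maximal (A S : {set T}) x : S \subset A -> is_stable e S ->
  #|S| = alphaS A -> x \in A -> x \notin S -> exists2 s, s \in S & e x s.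
Proof.
move=> sSA stS cS xA xS.
case: (boolP [exists s in S, e x s]) => [/exists_inP[s sS exs]|nE].
  by exists s.
have : #|x |: S| <= alphaS A.
  apply: stable_le.
    by rewrite subUset sub1set xA.
  apply/isstableP => a b; rewrite !inE => /orP[/eqP->|aS] /orP[/eqP->|bS].
  - by rewrite eirr.
  - by apply/negP => exb; move/negP: nE; apply; apply/exists_inP; exists b.
  - by apply/negP => exa; move/negP: nE; apply; apply/exists_inP; exists a; rewrite // esym.
  - by move/isstableP: stS; apply.
by rewrite cardsU1 xS -cS add1n ltnn.
Qed.

Lemma Delta_drop (A S : {set T}) : S \subset A -> is_stable e S ->
  #|S| = alphaS A -> A :\: S != set0 -> DeltaS (A :\: S) < DeltaS A.
Proof.
move=> sSA stS cS /Delta_ex [x xA' ->].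
have [xnS xA] : x \notin S /\ x \in A by move: xA'; rewrite inE => /andP.
have [s sS exs] := stable_maximal sSA stS cS xA xnS.
apply: leq_trans (deg_le xA).
rewrite /degS; apply: proper_card; apply/properP; split.
  by apply/subsetP => y; rewrite !inE => /andP[/andP[_ ->] ->].
exists s; first by rewrite inE exs (subsetP sSA).
by rewrite !inE sS.
Qed.

Section Matching.
Variable A : {set T}.

Lemma csym : symmetric (compl_rel e).
Proof. by move=> x y; rewrite /compl_rel /= eq_sym esym. Qed.

Definition matching (p : {ffun T -> T}) : bool :=
  [forall x, (p (p x) == x) && ((p x != x) ==> (x \in A) && compl_rel e x (p x))].

Definition msize (p : {ffun T -> T}) := #|[set x | p x != x]|.

Definition maxm p := matching p /\ forall q, matching q -> msize q <= msize p.

Lemma maxm_ex : exists p, maxm p.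
Proof.
have m0 : matching [ffun x => x].
  by apply/forallP => x; rewrite !ffunE eqxx.
case: (@arg_maxnP _ [ffun x => x] matching msize m0) => p mp Hp.
by exists p; split.
Qed.

Lemma mP1 p x : matching p -> p (p x) = x.
Proof. by move/forallP/(_ x)/andP => [/eqP]. Qed.

Lemma mP2 p x : matching p -> p x != x -> x \in A /\ compl_rel e x (p x).
Proof. by move=> /forallP/(_ x)/andP[_ /implyP H] /H /andP. Qed.

Lemma mP3 p x : matching p -> p x != x -> p x \in A.
Proof.
move=> mp px; have [] := mP2 (x := p x) mp; rewrite ?mP1 //.
by rewrite eq_sym.
Qed.

Lemma S1 p z w : maxm p -> z \in A -> w \in A -> p z = z -> p w = w ->
  compl_rel e z w -> False.
Proof.
move=> [mp Hmax] zA wA pz pw czw.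
have zw : z != w by move: czw; rewrite /compl_rel /= => /andP[].
pose q := [ffun y => if y == z then w else if y == w then z else p y].
have pyz y : y != z -> p y != z.
  by move=> yz; apply/eqP => E; move: yz; rewrite -pz -E mP1 ?eqxx.
have pyw y : y != w -> p y != w.
  by move=> yw; apply/eqP => E; move: yw; rewrite -pw -E mP1 ?eqxx.
have qz : q z = w by rewrite ffunE eqxx.
have qw : q w = z by rewrite ffunE eq_sym (negbTE zw) eqxx.
have qy y : y != z -> y != w -> q y = p y.
  by move=> yz yw; rewrite ffunE (negbTE yz) (negbTE yw).
have mq : matching q.
  apply/forallP => y.
  case: (eqVneq y z) => [->|yz]; first by rewrite qz qw eqxx /= eq_sym zw zA czw.
  case: (eqVneq y w) => [->|yw]; first by rewrite qw qz eqxx /= zw wA csym czw.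
  rewrite qy // qy ?pyz ?pyw // mP1 // eqxx /=.
  by have /forallP/(_ y)/andP[] := mp.
have : msize q <= msize p by apply: Hmax.
rewrite /msize.
have -> : [set x | q x != x] = z |: (w |: [set x | p x != x]).
  apply/setP => y; rewrite !inE.
  case: (eqVneq y z) => [->|yz]; first by rewrite qz eq_sym zw.
  case: (eqVneq y w) => [->|yw] /=; first by rewrite qw zw.
  by rewrite qy.
rewrite !cardsU1 !inE pz pw eqxx /= (negbTE zw).
rewrite /= eqxx /=; move: #|_| => m; clear; lia.
Qed.

Lemma S2 p u x : maxm p -> u \in A -> p u = u -> p x != x -> compl_rel e u x ->
  exists q, [/\ maxm q, q u = x, q x = u, q (p x) = p x &
     forall z, z != u -> z != x -> z != p x -> q z = p z].
Proof.
move=> [mp Hmax] uA pu px cux.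
have ux : u != x by move: cux; rewrite /compl_rel /= => /andP[].
have uy : u != p x by apply/eqP => E; move: ux; rewrite -pu E mP1 // eqxx.
have xy : x != p x by rewrite eq_sym.
pose q := [ffun z => if z == u then x else if z == x then u else if z == p x then p x else p z].
have qu : q u = x by rewrite ffunE eqxx.
have qx : q x = u by rewrite ffunE eq_sym (negbTE ux) eqxx.
have qy : q (p x) = p x by rewrite ffunE eq_sym (negbTE uy) eq_sym (negbTE xy) eqxx.
have qz z : z != u -> z != x -> z != p x -> q z = p z.
  by move=> zu zx zy; rewrite ffunE (negbTE zu) (negbTE zx) (negbTE zy).
have mq : matching q.
  apply/forallP => z.
  case: (eqVneq z u) => [->|zu]; first by rewrite qu qx eqxx /= eq_sym ux uA cux.
  case: (eqVneq z x) => [->|zx].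
    by rewrite qx qu eqxx /= ux (mP2 mp px).1 csym cux.
  case: (eqVneq z (p x)) => [->|zy]; first by rewrite qy qy eqxx.
  rewrite (qz z) //.
  have pzu : p z != u by apply/eqP => E; move: zu; rewrite -(mP1 z mp) E pu eqxx.
  have pzx : p z != x by apply/eqP => E; move: zy; rewrite -(mP1 z mp) E eqxx.
  have pzy : p z != p x by apply/eqP => E; move: zx; rewrite -(mP1 z mp) E mP1 // eqxx.
  rewrite (qz (p z)) // mP1 // eqxx /=.
  by have /forallP/(_ z)/andP[] := mp.
have sq : msize q = msize p.
  rewrite /msize.
  have -> : [set z | q z != z] = u |: ([set z | p z != z] :\ p x).
    apply/setP => z; rewrite !inE.
    case: (eqVneq z u) => [->|zu]; first by rewrite qu eq_sym ux.
    case: (eqVneq z x) => [->|zx]; first by rewrite qx ux xy px.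
    case: (eqVneq z (p x)) => [->|zy]; first by rewrite qy eqxx.
    by rewrite qz.
  rewrite cardsU1 !inE pu eqxx andbF /= add1n.
  rewrite (cardsD1 (p x) [set z | p z != z]) inE mP1 // eq_sym px. by [].
exists q; split => //; split => // r mr; rewrite sq; exact: Hmax.
Qed.

Lemma nc_e x y : x != y -> ~~ compl_rel e x y -> e x y.
Proof. by rewrite /compl_rel /= => -> /=; rewrite negbK. Qed.

Lemma c_neq x y : compl_rel e x y -> x != y.
Proof. by rewrite /compl_rel /= => /andP[]. Qed.

Section Max.
Hypothesis a2 : alphaS A <= 2.
Variable p : {ffun T -> T}.
Hypothesis pmax : maxm p.

Let mp : matching p. Proof. by case: pmax. Qed.

Lemma no3 a b c : a \in A -> b \in A -> c \in A ->
  compl_rel e a b -> compl_rel e a c -> compl_rel e b c -> False.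
Proof.
move=> aA bA cA cab cac cbc.
have : #|(a |: (b |: [set c])) : {set T}| <= alphaS A.
  apply: stable_le.
    by rewrite !subUset !sub1set aA bA cA.
  have ne x y : compl_rel e x y -> ~~ e x y by rewrite /compl_rel /= => /andP[].
  apply/isstableP => x y; rewrite !inE => /or3P[] /eqP-> /or3P[] /eqP->;
    rewrite ?eirr //; apply: ne; rewrite // csym //.
move=> H; have := leq_trans H a2.
rewrite !cardsU1 cards1 !inE (negbTE (c_neq cbc)) (negbTE (c_neq cab)) (negbTE (c_neq cac)).
by [].
Qed.

Lemma um w y : p w = w -> p y != y -> (w != y) /\ (w != p y).
Proof.
move=> pw py; split; apply/eqP => E.
  by move: py; rewrite -E pw eqxx.
by move: py; rewrite -(mP1 y mp) -E pw -{2}pw E mP1 // eqxx.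
Qed.

Lemma p_inj : injective p.
Proof. exact: (can_inj (fun x => mP1 x mp)). Qed.

Variable u : T.
Hypothesis uA : u \in A.
Hypothesis pu : p u = u.

Lemma Fm x : x \in A -> compl_rel e u x -> p x != x.
Proof.
move=> xA cux; apply/negP => /eqP px.
by apply: (S1 pmax uA xA pu px cux).
Qed.

Lemma F5 x v : x \in A -> compl_rel e u x -> v \in A -> p v = v ->
  ~~ compl_rel e (p x) v.
Proof.
move=> xA cux vA pv; apply/negP => cyv.
have px := Fm xA cux.
have [mp' _] := mP2 mp px.
case: (eqVneq v u) => [Evu|vu].
  subst v; apply: (no3 uA xA (mP3 mp px) cux _ (mP2 mp px).2).
  by rewrite csym.
have [q [qmax qu qx qy qz]] := S2 pmax uA pu px cux.
have [vx vy] := um pv px.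
apply: (S1 qmax (mP3 mp px) vA qy _ cyv).
by rewrite qz // pv.
Qed.

Lemma F6 x1 x2 v : x1 \in A -> compl_rel e u x1 -> x2 \in A -> compl_rel e u x2 ->
  x1 != x2 -> v \in A -> p v = v -> v != u -> compl_rel e x2 v ->
  ~~ compl_rel e (p x1) (p x2).
Proof.
move=> x1A cu1 x2A cu2 x12 vA pv vu c2v; apply/negP => cy12.
have p1 := Fm x1A cu1; have p2 := Fm x2A cu2.
have x2y1 : x2 != p x1.
  apply/eqP => E; apply: (no3 uA x1A x2A cu1 cu2).
  by rewrite E; exact: (mP2 mp p1).2.
have [u1 _] := um pu p1.
have [u2 uy2] := um pu p2.
have y2x1 : p x2 != x1.
  by apply/eqP => E; move: x2y1; rewrite -E mP1 ?eqxx.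
have y21 : p x2 != p x1 by apply: contra x12 => /eqP/p_inj ->.
have [q [qmax qu qx qy qz]] := S2 pmax uA pu p1 cu1.
have qx2 : q x2 = p x2 by rewrite qz // eq_sym.
have qy2 : q (p x2) = x2 by rewrite qz ?mP1 // eq_sym.
have qy2n : q (p x2) != p x2 by rewrite qy2 eq_sym.
have [q2 [q2max q2u q2x q2y q2z]] := S2 qmax (mP3 mp p1) qy qy2n cy12.
have [v1 vy1] := um pv p1.
have [v2 vy2] := um pv p2.
have q2x2 : q2 x2 = x2 by move: q2y; rewrite qy2.
have q2v : q2 v = v.
  rewrite q2z ?qy2 // 1?eq_sym //.
  by rewrite qz.
apply: (S1 q2max x2A vA q2x2 q2v c2v).
Qed.

End Max.

End Matching.

Lemma part_deg (A : {set T}) v : v \in A ->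
  #|[set y in A | compl_rel e v y]| + degS A v + 1 = #|A|.
Proof.
move=> vA.
rewrite /degS (cardsD1 v A) vA addn1 add1n; congr (_.+1).
rewrite -cardsUI.
have -> : [set y in A | compl_rel e v y] :&: [set y in A | e v y] = set0.
  apply/setP => y; rewrite !inE /compl_rel /=.
  by case: (e v y); rewrite ?andbF.
rewrite cards0 addn0; apply: eq_card => y; rewrite !inE /compl_rel /=.
case: (eqVneq y v) => [->|yv] /=; first by rewrite eirr !andbF.
by case: (e v y); case: (y \in A).
Qed.

Lemma I2 (A : {set T}) : alphaS A <= 2 ->
  exists k, colS A k /\ 4 * k <= 2 * omegaS A + #|A| + DeltaS A + 1.
Proof.
move=> a2.
have [p pmax] := maxm_ex A.
have mp : matching A p by case: pmax.
have mP1 x : p (p x) = x by have /forallP/(_ x)/andP[/eqP] := mp.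
have mP2 x : p x != x -> x \in A /\ compl_rel e x (p x).
  by move=> px; have /forallP/(_ x)/andP[_ /implyP/(_ px)/andP] := mp.
have mP3 x : p x != x -> p x \in A.
  by move=> px; have [] := mP2 (p x); rewrite ?mP1 // eq_sym.
set U := [set x in A | p x == x].
set R1 := [set x | (p x != x) && (enum_rank x < enum_rank (p x))%N].
set R2 := [set x | (p x != x) && (enum_rank (p x) < enum_rank x)%N].
have rk x : p x != x -> (enum_rank x < enum_rank (p x))%N || (enum_rank (p x) < enum_rank x)%N.
  move=> px; rewrite -neq_ltn; apply: contra px => /eqP E.
  by apply/eqP/enum_rank_inj; apply: val_inj.
have cR : #|R1| = #|R2|.
  rewrite -(card_imset _ (p_inj pmax)); apply: eq_card => y.
  apply/imsetP/idP => [[x]|]; rewrite !inE.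
    by move=> /andP[px lt] ->; rewrite mP1 lt andbT eq_sym.
  move=> /andP[py lt]; exists (p y); last by rewrite mP1.
  by rewrite inE mP1 lt andbT eq_sym.
have cA : #|A| = #|U| + #|R1| + #|R2|.
  have -> : A = U :|: R1 :|: R2.
    apply/setP => y; rewrite !inE.
    case: (eqVneq (p y) y) => [->|py] /=; first by rewrite andbT !orbF.
    rewrite andbF /=.
    have := (mP2 _ py).1; have := rk y py.
    by case: (y \in A); case: (enum_rank y < _)%N; case: (enum_rank (p y) < _)%N.
  rewrite cardsU cardsU.
  have -> : U :&: R1 = set0.
    by apply/setP => y; rewrite !inE; case: (p y == y); rewrite ?andbF.
  have -> : (U :|: R1) :&: R2 = set0.
    apply/setP => y; rewrite !inE; case: (p y == y); rewrite ?andbF //=.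
    by case: ltngtP.
  by rewrite !cards0 !subn0.
pose f x := if (enum_rank x <= enum_rank (p x))%N then x else p x.
have colf : colS A (#|U| + #|R1|).
  exists f; split.
  - move=> x xA; rewrite /f; case: ifP => // _.
    by case: (eqVneq (p x) x) => [->|px] //; apply: mP3 px.
  - move=> x y xA yA exy; rewrite /f.
    have nxy : ~~ compl_rel e x y by rewrite /compl_rel /= exy andbF.
    have xy : x != y by apply: contraTneq exy => ->; rewrite eirr.
    case: ifP => _; case: ifP => _; apply/eqP => E.
    + by move/eqP: xy.
    + have px : p y != y by apply: contra xy => /eqP py; rewrite E py.
      by move: nxy; rewrite E csym (mP2 _ px).2.
    + have px : p x != x by apply: contra xy => /eqP pxx; rewrite -E pxx.
      by move: nxy; rewrite -E (mP2 _ px).2.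
    + by move/eqP: xy; apply; rewrite -(mP1 x) E mP1.
  - apply: leq_trans (leq_card_setU U R1); apply: subset_leq_card.
    apply/subsetP => z /imsetP[x xA ->]; rewrite /f !inE.
    case: (eqVneq (p x) x) => [px|px].
      by rewrite px leqnn xA px eqxx.
    case: ifP => le.
      rewrite px /= ltn_neqAle le andbT orbC /=; apply/orP; left.
      by apply: contra px => /eqP E; apply/eqP; apply: enum_rank_inj; apply: val_inj.
    rewrite mP1 // eq_sym px /=; apply/orP; right.
    by rewrite ltnNge le.
exists (#|U| + #|R1|); split => //.
suff : #|A| + 2 * #|U| <= 2 * omegaS A + DeltaS A + 1.
  by rewrite cA -cR; move: #|U| #|R1| (omegaS A) (DeltaS A) => a b c d; lia.
case: (set_0Vmem U) => [U0|[u uU]].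
  rewrite U0 cards0 muln0 addn0.
  case: (set_0Vmem A) => [->|[v vA]]; first by rewrite cards0.
  rewrite -(part_deg vA).
  have cl : is_clique e [set y in A | compl_rel e v y].
    apply/iscliqueP => a b; rewrite !inE => /andP[aA cva] /andP[bA cvb] ab.
    apply: nc_e ab _; apply/negP => cab.
    by apply: (no3 a2 vA aA bA cva cvb cab).
  have sub : [set y in A | compl_rel e v y] \subset A.
    by apply/subsetP => y; rewrite inE => /andP[].
  have := clique_le sub cl; have := deg_le vA.
  move: #|[set y in A | compl_rel e v y]| (degS A v) (omegaS A) (DeltaS A) => a b c d.
  lia.
have [uA pu] : u \in A /\ p u = u by move: uU; rewrite inE => /andP[? /eqP].
have Uf w : w \in U -> w \in A /\ p w = w by rewrite inE => /andP[? /eqP].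
set X := [set y in A | compl_rel e u y].
have Xf x : x \in X -> x \in A /\ compl_rel e u x by rewrite inE => /andP.
set Xsh := [set x in X | [exists w in U, (w != u) && compl_rel e x w]].
set Xu := X :\: Xsh.
have eU : {in U &, forall a b, a != b -> e a b}.
  move=> a b aU bU ab; apply: nc_e ab _; apply/negP => cab.
  have [aA pa] := Uf a aU; have [bA pb] := Uf b bU.
  by apply: (S1 pmax aA bA pa pb cab).
have cl1 (Z : {set T}) : Z \subset X ->
    (forall x1 x2, x1 \in Z -> x2 \in Z -> x1 != x2 -> (x1 \in Xsh) || (x2 \in Xsh)) ->
    #|U| + #|Z| <= omegaS A.
  move=> sZX hZ.
  have Zf x : x \in Z -> x \in A /\ compl_rel e u x by move/(subsetP sZX)/Xf.
  have pZ x : x \in Z -> p x != x by move=> /Zf[xA cux]; apply: (Fm pmax uA pu xA cux).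
  have -> : #|U| + #|Z| = #|U :|: p @: Z|.
    rewrite [RHS]cardsU (card_imset _ (p_inj pmax)).
    have -> : U :&: p @: Z = set0.
      apply/setP => y; rewrite !inE; apply/negP => /andP[yU /imsetP[x xZ Ey]].
      have py : p y = y by move: yU => /andP[_ /eqP].
      have [_ /negP] := um pmax py (pZ x xZ); apply.
      by rewrite Ey.
    by rewrite cards0 subn0.
  apply: clique_le.
    rewrite subUset; apply/andP; split; apply/subsetP => y.
      by move/Uf => [].
    by move=> /imsetP[x xZ ->]; apply: mP3 (pZ x xZ).
  have eUp w x : w \in U -> x \in Z -> e w (p x).
    move=> wU xZ; have [wA pw] := Uf w wU; have [xA cux] := Zf x xZ.
    rewrite esym; apply: nc_e.
      by have [_ H] := um pmax pw (pZ x xZ); rewrite eq_sym.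
    exact: (F5 a2 pmax uA pu xA cux wA pw).
  apply/iscliqueP => a b; rewrite !in_setU => /orP[aU|/imsetP[x1 x1Z ->]] /orP[bU|/imsetP[x2 x2Z ->]] ab.
  - exact: eU.
  - exact: eUp.
  - by rewrite esym; apply: eUp.
  have x12 : x1 != x2 by apply: contra ab => /eqP ->.
  have [x1A cu1] := Zf x1 x1Z; have [x2A cu2] := Zf x2 x2Z.
  apply: nc_e ab _.
  case/orP: (hZ x1 x2 x1Z x2Z x12) => /[dup] xs; rewrite inE => /andP[_ /exists_inP[w wU /andP[wu cw]]];
    have [wA pw] := Uf w wU.
    by rewrite csym; apply: (F6 a2 pmax uA pu x2A cu2 x1A cu1 _ wA pw wu cw); rewrite eq_sym.
  by apply: (F6 a2 pmax uA pu x1A cu1 x2A cu2 x12 wA pw wu cw).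
have cX : #|X| = #|Xsh| + #|Xu|.
  rewrite /Xu -(cardsID Xsh X); congr (_ + _).
  by apply: eq_card => y; rewrite !inE; case: (y \in A); case: (compl_rel e u y); rewrite ?andbF.
have dg := deg_le uA.
have pd := part_deg uA.
have cU1 : #|U :\ u| + 1 = #|U| by rewrite (cardsD1 u U) uU add1n addn1.
case: (set_0Vmem Xu) => [Xu0|[x0 x0u]].
  have inXsh x : x \in X -> x \in Xsh.
    move=> xX; apply/negPn/negP => xs.
    have : x \in Xu by rewrite inE xs xX.
    by rewrite Xu0 inE.
  have hX x1 x2 : x1 \in X -> x2 \in X -> x1 != x2 -> (x1 \in Xsh) || (x2 \in Xsh).
    by move=> x1X _ _; rewrite inXsh.
  have := cl1 X (subxx _) hX.
  
  move: pd dg cX; rewrite Xu0 cards0.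
  move: #|X| (degS A u) (omegaS A) (DeltaS A) #|U| #|Xsh| => a b c d g h.
  lia.
have x0f : x0 \in X /\ x0 \notin Xsh by move: x0u; rewrite inE => /andP[].
have cl2 : #|U :\ u| + #|Xu| <= omegaS A.
  have -> : #|U :\ u| + #|Xu| = #|(U :\ u) :|: Xu|.
    rewrite [RHS]cardsU.
    have -> : (U :\ u) :&: Xu = set0.
      apply/setP => y; rewrite !inE; apply/negP => /andP[/andP[_ /andP[yA /eqP py]] /andP[_ /andP[_ cuy]]].
      by move/negP: (Fm pmax uA pu yA cuy); rewrite py.
    by rewrite cards0 subn0.
  apply: clique_le.
    rewrite subUset; apply/andP; split; apply/subsetP => y.
      by rewrite !inE => /andP[_ /andP[]].
    by rewrite !inE => /andP[_ /andP[]].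
  have Xuf x : x \in Xu -> [/\ x \in A, compl_rel e u x & x \notin Xsh].
    by rewrite inE => /andP[xs /Xf[xA cux]].
  have eUX w x : w \in U :\ u -> x \in Xu -> e w x.
    move=> /setD1P[wu wU] /Xuf[xA cux xs].
    have [wA pw] := Uf w wU.
    rewrite esym; apply: nc_e.
      by apply/eqP => E; move/negP: (Fm pmax uA pu xA cux); rewrite E pw eqxx.
    apply/negP => cxw; move/negP: xs; apply.
    by rewrite inE /X inE xA cux /=; apply/exists_inP; exists w => //; rewrite wu.
  apply/iscliqueP => a b; rewrite !in_setU => /orP[aU|aX] /orP[bU|bX] ab.
  - by apply: eU => //; [move/setD1P: aU => [] | move/setD1P: bU => []].
  - exact: eUX.
  - by rewrite esym; apply: eUX.
  - have [aA cua _] := Xuf a aX; have [bA cub _] := Xuf b bX.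
    apply: nc_e ab _; apply/negP => cab.
    by apply: (no3 a2 uA aA bA cua cub cab).
have := cl1 (x0 |: Xsh).
have sZ : x0 |: Xsh \subset X.
  by rewrite subUset sub1set x0f.1; apply/subsetP => y; rewrite inE => /andP[].
move=> /(_ sZ) H.
have : #|U| + #|(x0 |: Xsh) : {set T}| <= omegaS A.
  apply: H => x1 x2; rewrite !in_setU1 => /orP[/eqP->|->] // /orP[/eqP->|->];
    by rewrite ?eqxx ?orbT.
rewrite cardsU1 x0f.2.
move: pd dg cX cl2 cU1.
move: #|X| (degS A u) (omegaS A) (DeltaS A) #|U| #|Xsh| #|Xu| #|U :\ u| => a b c d g h i j.
lia.
Qed.

Lemma Lmain n (A : {set T}) : #|A| <= n ->
  exists k, colS A k /\ 4 * k + maxn (alphaS A) 3 <= 2 * omegaS A + #|A| + DeltaS A + 4.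
Proof.
elim: n A => [|n IH] A leA.
  have : alphaS A <= 2 by apply: leq_trans (alpha_le_card A) _; apply: leq_trans leA _.
  move=> /[dup] a2 /I2 [k [ck Hk]]; exists k; split => //.
  by rewrite (maxn_idPr (leq_trans a2 (leqnSn 2))); lia.
case: (leqP (alphaS A) 2) => a2.
  have [k [ck Hk]] := I2 a2; exists k; split => //.
  by rewrite (maxn_idPr (leq_trans a2 (leqnSn 2))); lia.
have [S [sSA stS cS]] := alpha_ex A.
set A' := A :\: S.
have eA : A = S :|: A'.
  by rewrite /A' -{1}(setID A S) (setIidPr sSA).
have dSA : [disjoint S & A'].
  by rewrite /A' -setI_eq0; apply/eqP/setP => y; rewrite !inE; case: (y \in S).
have cA' : #|A'| = #|A| - #|S| by rewrite /A' cardsDS.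
have cSA : #|S| <= #|A| by apply: subset_leq_card.
case: (eqVneq A' set0) => A'0.
  exists 1; split.
    rewrite eA A'0; apply: (@col_stable_add S set0 0) => //.
      by rewrite -setI_eq0 setI0.
    by rewrite -(cards0 T); apply: col_self.
  have : #|A| = #|S| by move: cA'; rewrite A'0 cards0; lia.
  rewrite maxnE; lia.
have ltA : #|A'| <= n.
  have : 0 < #|S| by lia.
  lia.
have [k [ck Hk]] := IH A' ltA.
exists k.+1; split.
  by rewrite eA; apply: col_stable_add.
have o1 : omegaS A' <= omegaS A by apply: omega_mono; rewrite /A' subsetDl.
have d1 : DeltaS A' < DeltaS A := Delta_drop sSA stS cS A'0.
move: Hk; rewrite cA' cS !maxnE. lia.
Qed.


Lemma omegaT : omega e = omegaS setT.
Proof. by rewrite /omega /omegaS; apply: eq_bigl => C; rewrite subsetT. Qed.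

Lemma alphaT : alpha e = alphaS setT.
Proof. by rewrite /alpha /alphaS; apply: eq_bigl => C; rewrite subsetT. Qed.

Lemma DeltaT : Delta e = DeltaS setT.
Proof.
rewrite /Delta /DeltaS; apply: eq_big => [x|x _]; first by rewrite inE.
by rewrite /degS; apply: eq_card => y; rewrite !inE.
Qed.

Lemma deg_join (X Y : {set T}) x : x \in X -> [disjoint X & Y] ->
  (forall y, y \in Y -> e x y) -> degS X x + #|Y| <= Delta e.
Proof.
move=> xX dXY hY.
apply: leq_trans (_ : #|[set y | e x y]| <= _); last first.
  by apply: (@leq_bigmax_cond _ (fun _ => true) (fun x => #|[set y | e x y]|) x).
rewrite /degS -cardsUI.
have -> : [set y in X | e x y] :&: Y = set0.
  apply/setP => y; rewrite !inE; apply/negP => /andP[/andP[yX _] yY].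
  by move: (disjointFr dXY yX); rewrite yY.
rewrite cards0 addn0; apply: subset_leq_card; apply/subsetP => y.
by rewrite !inE => /orP[/andP[_ ->]|/hY ->].
Qed.

Lemma bound_n1 : 0 < #|T| ->
  4 * chi eirr + alpha e <= 2 * omega e + 2 * Delta e + 4 * #|T|.-1 + 6.
Proof.
move=> hT.
have [S [_ stS cS]] := alpha_ex setT.
have cT : colS setT (#|setT :\: S| + 1).
  rewrite addn1; have := @col_stable_add S (setT :\: S) _ stS _ (col_self _).
  have -> : S :|: (setT :\: S) = setT by apply/setP => y; rewrite !inE; case: (y \in S).
  apply; rewrite -setI_eq0; apply/eqP/setP => y; rewrite !inE; by case: (y \in S).
have := chi_le hT cT.
have o1 : 1 <= omega e.
  move/card_gt0P: hT => [x _]; rewrite omegaT; apply: leq_trans (clique_le (subsetT [set x]) _).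
    by rewrite cards1.
  by apply/iscliqueP => a b; rewrite !inE => /eqP-> /eqP->; rewrite eqxx.
have cST : #|setT :\: S| = #|T| - #|S| by rewrite cardsDS ?subsetT // cardsT.
have : #|S| <= #|T| by rewrite -cardsT; apply: subset_leq_card; apply: subsetT.
rewrite cST alphaT -cS; lia.
Qed.

Lemma final_arith ch kA kB kK oA oB o aA aB dA dB D nA nB k s t :
 ch <= kA + kB + kK -> 4*kA + maxn aA 3 <= 2*oA + nA + dA + 4 ->
 4*kB + maxn aB 3 <= 2*oB + nB + dB + 4 -> oA + oB <= o -> nB + dA <= D ->
 nA + dB <= D -> 4*kK + s <= 4*k + 1 -> (t <= aA \/ t <= aB) ->
 4*ch + (t + s) <= 2*o + 2*D + 4*k + 6.
Proof. rewrite !maxnE; move=> *; lia. Qed.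

Lemma bound_sep (K : {set T}) : 0 < #|T| -> disconnects (compl_rel e) K ->
  4 * chi eirr + alpha e <= 2 * omega e + 2 * Delta e + 4 * #|K| + 6.
Proof.
move=> hT /existsP[u /existsP[v /and3P[uK vK nuv]]].
set r := [rel x y | [&& compl_rel e x y, x \notin K & y \notin K]] in nuv.
set Aa := [set x | (x \notin K) && connect r u x].
set Bb := [set x | (x \notin K) && ~~ connect r u x].
have uA : u \in Aa by rewrite inE uK connect0.
have vB : v \in Bb by rewrite inE vK nuv.
have join x y : x \in Aa -> y \in Bb -> e x y.
  rewrite !inE => /andP[xK cx] /andP[yK ncy]; apply/negPn/negP => nexy.
  have xy : x != y by apply/eqP => Exy; move: ncy; rewrite -Exy cx.
  move/negP: ncy; apply; apply: connect_trans cx (connect1 _).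
  by rewrite /= /compl_rel /= xy nexy xK yK.
have dAB : [disjoint Aa & Bb].
  by rewrite -setI_eq0; apply/eqP/setP => y; rewrite !inE; case: (connect r u y); rewrite ?andbF.
have dABK : [disjoint Aa :|: Bb & K].
  by rewrite -setI_eq0; apply/eqP/setP => y; rewrite !inE; case: (y \in K); rewrite ?andbF.
have eT : Aa :|: Bb :|: K = setT.
  by apply/setP => y; rewrite !inE; case: (y \in K); case: (connect r u y).
have [CA [sCA clA cCA]] := omega_ex Aa.
have [CB [sCB clB cCB]] := omega_ex Bb.
have om : omegaS Aa + omegaS Bb <= omega e.
  rewrite -cCA -cCB omegaT.
  have -> : #|CA| + #|CB| = #|CA :|: CB|.
    rewrite -cardsUI.
    have -> : CA :&: CB = set0.
      apply/setP => y; rewrite !inE; apply/negP => /andP[/(subsetP sCA) yA /(subsetP sCB) yB].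
      by move: (disjointFr dAB yA); rewrite yB.
    by rewrite cards0 addn0.
  apply: clique_le; first by apply: subsetT.
  apply/iscliqueP => a b; rewrite !inE => /orP[aA|aB] /orP[bA|bB] ab.
  - by move/iscliqueP: clA; apply.
  - by apply: join; [apply: (subsetP sCA) | apply: (subsetP sCB)].
  - by rewrite esym; apply: join; [apply: (subsetP sCA) | apply: (subsetP sCB)].
  - by move/iscliqueP: clB; apply.
have dA : #|Bb| + DeltaS Aa <= Delta e.
  have nA : Aa != set0 by apply/set0Pn; exists u.
  have [x xA ->] := Delta_ex nA.
  by rewrite addnC; apply: deg_join => // y yB; apply: join.
have dB : #|Aa| + DeltaS Bb <= Delta e.
  have nB : Bb != set0 by apply/set0Pn; exists v.
  have [x xB ->] := Delta_ex nB.
  rewrite addnC; apply: deg_join => //; first by rewrite disjoint_sym.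
  by move=> y yA; rewrite esym; apply: join.
have [S [_ stS cS]] := alpha_ex setT.
have stSK : is_stable e (S :\: K).
  by apply/isstableP => a b; rewrite !inE => /andP[_ aS] /andP[_ bS]; move/isstableP: stS; apply.
have aSK : #|S :\: K| <= alphaS Aa \/ #|S :\: K| <= alphaS Bb.
  case: (boolP [exists x in S :\: K, x \in Bb]) => [/exists_inP[b bSK bB]|nB].
    right; apply: stable_le => //; apply/subsetP => a aSK.
    rewrite inE; move: (aSK); rewrite inE => /andP[aK aS]; rewrite aK /=.
    apply/negP => ca.
    have aA : a \in Aa by rewrite inE aK ca.
    move/isstableP: stSK => /(_ a b aSK bSK); by rewrite join.
  left; apply: stable_le => //; apply/subsetP => a aSK.
  rewrite inE; move: (aSK); rewrite inE => /andP[aK aS]; rewrite aK /=.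
  apply/negPn/negP => ca; move/negP: nB; apply; apply/exists_inP; exists a => //.
  by rewrite inE aK ca.
have [kA [cAk HA]] := Lmain (leqnn #|Aa|).
have [kB [cBk HB]] := Lmain (leqnn #|Bb|).
have [kK [cKk HK]] : exists kK, colS K kK /\ 4 * kK + #|S :&: K| <= 4 * #|K| + 1.
  case: (eqVneq (S :&: K) set0) => SK0.
    by exists #|K|; split; [apply: col_self | rewrite SK0 cards0 addn0 leq_addr].
  exists (#|K :\: S| + 1); split.
    rewrite addn1.
    have eK : (S :&: K) :|: (K :\: S) = K.
      by apply/setP => y; rewrite !inE; case: (y \in S); case: (y \in K).
    suff : colS ((S :&: K) :|: (K :\: S)) (#|K :\: S|).+1 by rewrite eK.
    apply: col_stable_add.
    + by apply/isstableP => a b; rewrite !inE => /andP[aS _] /andP[bS _]; move/isstableP: stS; apply.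
    + by rewrite -setI_eq0; apply/eqP/setP => y; rewrite !inE; case: (y \in S); rewrite ?andbF.
    + by apply: col_self.
  have : 0 < #|S :&: K| by rewrite card_gt0.
  have := cardsID S K; rewrite setIC.
  move: #|S :&: K| #|K :\: S| #|K| => a b c; clear; lia.
have cT : colS setT (kA + kB + kK).
  rewrite -eT; apply: col_union => //; apply: col_union => //.
have ch := chi_le hT cT.
have eS : #|S| = #|S :\: K| + #|S :&: K| by rewrite -(cardsID K S) addnC.
rewrite alphaT -cS eS.
by apply: (final_arith ch HA HB om dA dB HK aSK).
Qed.

End Params.

Import GRing.Theory Num.Theory.
From mathcomp Require Import lra.

Lemma main_nat (T : finType) (e : rel T) (esym : symmetric e) (eirr : irreflexive e)
  (hT : (0 < #|T|)%N) :
  (4 * chi eirr + alpha e <= 2 * omega e + 2 * Delta e + 4 * kappa (compl_rel e) + 6)%N.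
Proof.
rewrite /kappa.
apply: (big_ind (fun m => 4 * chi eirr + alpha e <= 2 * omega e + 2 * Delta e + 4 * m + 6)%N).
- exact: bound_n1.
- move=> x y Hx Hy /=; case: (leqP x y) => h.
    by [].
  by [].
- by move=> K HK; apply: bound_sep.
Qed.

Local Open Scope ring_scope.

Theorem corollary7 (T : finType) (e : rel T)
  (esym : symmetric e) (eirr : irreflexive e) (hT : (0 < #|T|)%N) :
  ((chi eirr)%:R : rat) <=
    ((omega e)%:R + (Delta e)%:R + 1) / 2 + (kappa (compl_rel e))%:R + 1
    - (alpha e)%:R / 4.
Proof.
have := main_nat esym eirr hT.
move: (chi eirr) (alpha e) (omega e) (Delta e) (kappa (compl_rel e)) => c a o d k H.
have : ((4 * c + a)%N%:R <= (2 * o + 2 * d + 4 * k + 6)%N%:R :> rat) by rewrite ler_nat.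
rewrite !natrD; lra.
Qed.
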